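(* Let $P$ be a convex polygon with no two edges parallel, and let $e_i,e_j$ be edges with $e_i\prec e_j$. (1) In the domain $P$, the function $\mathrm{disprod}_{\ell_i,\ell_j}$ achieves its maximum value at a unique point, denoted $Z_i^j$. (2) The point $Z_i^j$ lies on $\partial P$; moreover it lies in both $[\mathsf{D}_i\circlearrowright \mathsf{D}_j]$ and $(v_{j+1}\circlearrowright v_i)$. (3) If $Z_i^j$ lies in some edge $e_k$, then it is the midpoint of $\mathsf{I}_{i,k}$ and $\mathsf{I}_{j,k}$.
   Context: $P$ is a compact convex polygon with boundary $\partial P$, edges $e_1,\ldots,e_n$ in clockwise order and vertices $v_1,\ldots,v_n$, where $e_i$ is the open segment from $v_i$ to $v_{i+1}$ (indices modulo $n$). $\ell_i$ is the line containing $e_i$, and $\mathsf{I}_{i,j}$ is the intersection point of $\ell_i$ and $\ell_j$. $d_l(X)$ is the distance from $X$ to line $l$ and $\mathrm{disprod}_{l,l'}(X)=d_l(X)d_{l'}(X)$. For distinct edges, $e_i\prec e_j$ (''$e_i$ is chasing $e_j$'') means that $\mathsf{I}_{i,j}$ lies between $e_i$ and $e_j$ in the clockwise sense, i.e. $\mathsf{I}_{i,j}=v_i+t(v_{i+1}-v_i)$ for some $t\ge 1$ (equivalently, the clockwise turning angle from the direction $v_{i+1}-v_i$ to the direction $v_{j+1}-v_j$ lies strictly between $0$ and $\pi$); for any two distinct edges exactly one chases the other. $\mathsf{D}_i$ denotes the unique vertex of $P$ at largest distance from $\ell_i$. For $X,X'\in\partial P$, $[X\circlearrowright X']$ is the closed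 portion of $\partial P$ traversed moving clockwise from $X$ to $X'$, and $(X\circlearrowright X')$ is the same portion without its endpoints. *)

(* Defs.v *)
(* points of the plane are pairs (x, y) over R : realType,
   with the usual orientation (x to the right, y up). *)
From HB Require Import structures.
From mathcomp Require Import all_boot all_order all_algebra.
From mathcomp Require Import reals.
Set Implicit Arguments. Unset Strict Implicit. Unset Printing Implicit Defensive.
Import Order.TTheory GRing.Theory Num.Theory.
Local Open Scope ring_scope.

Section Polygon.
Variable R : realType.

Definition psub (p q : R * R) : R * R := (p.1 - q.1, p.2 - q.2).
Definition cross (p q : R * R) : R := p.1 * q.2 - p.2 * q.1.
Definition pnorm (p : R * R) : R := Num.sqrt (p.1 ^+ 2 + p.2 ^+ 2).
Definition midpoint (p q : R * R) : R * R := ((p.1 + q.1) / 2, (p.2 + q.2) / 2).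

Variables (n : nat) (v : nat -> R * R).

Definition V (i : nat) : R * R := v (i %% n)%N.
Definition dir (i : nat) : R * R := psub (V i.+1) (V i).
(* signed area test: < 0 means X strictly to the right of the directed line l_i *)
Definition side (i : nat) (X : R * R) : R := cross (dir i) (psub X (V i)).
Definition seg_pt (k : nat) (t : R) : R * R :=
  ((V k).1 + t * (dir k).1, (V k).2 + t * (dir k).2).

(* n >= 3 and the vertices are in strictly convex position listed clockwise:
   every other vertex lies strictly to the right of each directed edge line. *)
Definition convex_cw : Prop :=
  (3 <= n)%N /\
  forall i m, (i < n)%N -> (m < n)%N -> m != i -> m != (i.+1 %% n)%N ->
    side i (V m) < 0.

Definition no_parallel : Prop :=
  forall i j, (i < n)%N -> (j < n)%N -> i != j -> cross (dir i) (dir j) != 0.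

Definition inP (X : R * R) : Prop := forall i, (i < n)%N -> side i X <= 0.

Definition dist_line (i : nat) (X : R * R) : R := `|side i X| / pnorm (dir i).
Definition disprod (i j : nat) (X : R * R) : R := dist_line i X * dist_line j X.

Definition in_edge (k : nat) (X : R * R) : Prop :=
  exists2 t, 0 < t < 1 & X = seg_pt k t.

Definition bparam (s : R) (X : R * R) : Prop :=
  exists k t, [/\ (k < n)%N, 0 <= t < 1, s = k%:R + t & X = seg_pt k t].

Definition on_boundary (X : R * R) : Prop := exists s, bparam s X.

(* Y in [X ↻ X'] : closed clockwise arc of the boundary from X to X' *)
Definition in_carc (X X' Y : R * R) : Prop :=
  exists a b c, [/\ bparam a X, bparam b Y, bparam c X' &
    ((a <= c /\ a <= b <= c) \/ (c < a /\ (a <= b \/ b <= c)))].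

(* Y in (X ↻ X') : the same arc without its endpoints *)
Definition in_oarc (X X' Y : R * R) : Prop :=
  exists a b c, [/\ bparam a X, bparam b Y, bparam c X' &
    ((a <= c /\ a < b < c) \/ (c < a /\ (a < b \/ b < c)))].

(* I_{i,j} = v_i + Iparam i j * (v_{i+1} - v_i) is the intersection of l_i, l_j *)
Definition Iparam (i j : nat) : R :=
  cross (psub (V j) (V i)) (dir j) / cross (dir i) (dir j).
Definition Ipt (i j : nat) : R * R := seg_pt i (Iparam i j).

Definition chases (i j : nat) : Prop := 1 <= Iparam i j.

Definition isD (i k : nat) : Prop :=
  (k < n)%N /\
  forall m, (m < n)%N -> m != k -> dist_line i (V m) < dist_line i (V k).

End Polygon.

(* Main.v *)
Require Import Defs.
From HB Require Import structures.
From mathcomp Require Import all_boot all_order all_algebra.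
From mathcomp Require Import reals.
From mathcomp Require Import lra ring zify.
Import Order.TTheory GRing.Theory Num.Theory.
Local Open Scope ring_scope.

Section S.
Variable R : realType.
Variables (n : nat) (v : nat -> R * R).
Hypothesis Hcv : convex_cw n v.
Hypothesis Hnp : no_parallel n v.

Lemma V_mod x : V n v (x %% n) = V n v x.
Proof. by rewrite /V modn_mod. Qed.
Lemma V_addn x : V n v (x + n) = V n v x.
Proof. by rewrite /V modnDr. Qed.
Lemma V_eqmod x y : x = y %[mod n] -> V n v x = V n v y.
Proof. by rewrite /V => ->. Qed.
Lemma dir_eqmod x y : x = y %[mod n] -> dir n v x = dir n v y.
Proof.
move=> h; rewrite /dir (V_eqmod _ _ h); congr psub; apply: V_eqmod.
by rewrite -[x.+1]addn1 -[y.+1]addn1 -modnDml h modnDml.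
Qed.
Lemma side_eqmod x y X : x = y %[mod n] -> side n v x X = side n v y X.
Proof. by move=> h; rewrite /side (dir_eqmod _ _ h) (V_eqmod _ _ h). Qed.

Lemma n3 : (3 <= n)%N. Proof. by case: Hcv. Qed.

Lemma side_V_lt e m : (m %% n != e %% n)%N -> (m %% n != e.+1 %% n)%N ->
  side n v e (V n v m) < 0.
Proof.
move=> h1 h2; case: Hcv => h3 H.
have n0 : (0 < n)%N by apply: leq_trans h3.
have := H (e %% n)%N (m %% n)%N (ltn_pmod _ n0) (ltn_pmod _ n0) h1.
rewrite -[(e %% n).+1]addn1 modnDml addn1 => /(_ h2).
by rewrite (side_eqmod _ _ _ (modn_mod e n)) V_mod.
Qed.

Lemma turn k : cross (dir n v k) (dir n v k.+1) < 0.
Proof.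
have h3 := n3.
have := @side_V_lt k k.+2.
have e1 : (k.+2 %% n != k %% n)%N.
  by rewrite -[k.+2]addn2 -{2}[k]addn0 eqn_modDl mod0n modn_small.
have e2 : (k.+2 %% n != k.+1 %% n)%N.
  by rewrite -[k.+2]addn2 -[k.+1]addn1 eqn_modDl !modn_small //; apply: leq_trans h3.
move=> /(_ e1 e2); rewrite /side /dir /cross /psub /=.
lra.
Qed.

Lemma side_self e : side n v e (V n v e) = 0.
Proof. rewrite /side /cross /psub /=; ring. Qed.
Lemma side_self1 e : side n v e (V n v e.+1) = 0.
Proof. rewrite /side /dir /cross /psub /=; ring. Qed.

Lemma side_V_le e m : side n v e (V n v m) <= 0.
Proof.
case: (eqVneq (m %% n)%N (e %% n)%N) => h1.
  by rewrite (V_eqmod _ _ h1) side_self.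
case: (eqVneq (m %% n)%N (e.+1 %% n)%N) => h2.
  by rewrite (V_eqmod _ _ h2) side_self1.
by apply/ltW/(side_V_lt _ _ h1 h2).
Qed.

Lemma side_V_zero e m : side n v e (V n v m) = 0 ->
  (m %% n)%N = (e %% n)%N \/ (m %% n)%N = (e.+1 %% n)%N.
Proof.
case: (eqVneq (m %% n)%N (e %% n)%N) => h1; first by left.
case: (eqVneq (m %% n)%N (e.+1 %% n)%N) => h2; first by right.
by move=> h; have := side_V_lt _ _ h1 h2; rewrite h ltxx.
Qed.

Lemma side_step e k : side n v e (V n v k) - side n v e (V n v k.+1)
  = cross (dir n v k) (dir n v e).
Proof. rewrite /side /dir /cross /psub /=; ring. Qed.

Lemma modD_neq e s : (0 < s < n)%N -> ((e + s) %% n != e %% n)%N.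
Proof.
case/andP=> h1 h2; rewrite -{2}[e]addn0 eqn_modDl mod0n modn_small //; lia.
Qed.

Lemma modD_neq1 e s : (1 < s < n)%N -> ((e + s) %% n != e.+1 %% n)%N.
Proof.
case/andP=> h1 h2; rewrite -[e.+1]addn1 eqn_modDl !modn_small //; lia.
Qed.

Lemma side_shift_lt e s : (1 < s < n)%N -> side n v e (V n v (e + s)) < 0.
Proof.
move=> h; apply: side_V_lt; last exact: modD_neq1.
apply: modD_neq; case/andP: h => h1 h2; rewrite h2 andbT; exact: ltn_trans h1.
Qed.

Lemma cone (d1 d2 y w : R * R) : cross d1 d2 < 0 -> cross d1 y <= 0 ->
  cross d2 y <= 0 -> 0 <= cross d1 w -> cross d2 w <= 0 -> cross y w <= 0.
Proof.
move=> h1 h2 h3 h4 h5.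
have id : cross d1 d2 * cross y w =
   - cross d2 y * cross d1 w + cross d1 y * cross d2 w.
  by rewrite /cross; ring.
nra.
Qed.

Lemma hp_trans (u w z d : R * R) : cross u w < 0 -> cross w z < 0 ->
  0 < cross u d -> 0 < cross w d -> 0 < cross z d -> cross u z < 0.
Proof.
move=> h1 h2 h3 h4 h5.
have id : cross w d * cross u z = cross u w * cross z d + cross u d * cross w z.
  by rewrite /cross; ring.
nra.
Qed.

Lemma signs_switch (sg : nat -> R) N : 0 < sg 0%N -> sg N < 0 ->
  (forall s, (s <= N)%N -> sg s != 0) ->
  (forall s, (s < N)%N -> ~ (sg s < 0 /\ 0 < sg s.+1)) ->
  exists p, (1 <= p <= N)%N /\ forall s, (s <= N)%N ->
     ((s < p)%N -> 0 < sg s) /\ ((p <= s)%N -> sg s < 0).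
Proof.
move=> h0 hN hnz hnm.
have ex : exists s, (s <= N)%N && (sg s < 0) by exists N; rewrite leqnn hN.
case: (ex_minnP ex) => p /andP [pN pneg] pmin.
exists p; split.
  rewrite pN andbT lt0n; apply/eqP => p0; move: pneg; rewrite p0.
  by move=> h; have := lt_trans h h0; rewrite ltxx.
move=> s sN; split.
  move=> sp; have : ~~ ((s <= N)%N && (sg s < 0)).
    by apply/negP => /pmin; rewrite leqNgt sp.
  rewrite sN /= -leNgt le_eqVlt => /orP [/eqP h|//].
  by move: (hnz s sN); rewrite h eqxx.
move=> ps.
have key : forall k, (p + k <= N)%N -> sg (p + k)%N < 0.
  elim=> [|k IH] hk; first by rewrite addn0.
  have neg := IH ltac:(lia); have hh := hnm (p + k)%N ltac:(lia).
  have := hnz (p + k).+1 ltac:(lia); rewrite addnS.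
  case: (ltgtP (sg (p + k).+1) 0) => // pos _.
  by case: hh.
have := key (s - p)%N; rewrite subnKC //; exact.
Qed.

Lemma peak (H sg : nat -> R) N p : (forall s, H s.+1 - H s = sg s) ->
  (p <= N)%N -> (forall s, (s <= N)%N ->
     ((s < p)%N -> 0 < sg s) /\ ((p <= s)%N -> sg s < 0)) ->
  forall s, (s <= N.+1)%N -> s != p -> H s < H p.
Proof.
move=> hd pN hs s sN sp.
case: (ltngtP s p) => [lt|gt|eq]; last by rewrite eq eqxx in sp.
- have key : forall k s0, (s0 + k.+1)%N = p -> H s0 < H p.
    elim=> [|k IH] s0 e.
      have s0N : (s0 <= N)%N by lia.
      have [+ _] := hs s0 s0N; have -> : (s0 < p)%N by lia.
      move=> /(_ isT); rewrite -hd; have -> : p = s0.+1 by lia.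
      by rewrite subr_gt0.
    have s0N : (s0 <= N)%N by lia.
    have := IH s0.+1 ltac:(lia).
    have [+ _] := hs s0 s0N; have -> : (s0 < p)%N by lia.
    move=> /(_ isT); rewrite -hd subr_gt0; exact: lt_trans.
  apply: (key (p - s.+1)%N); lia.
- have key : forall k, (p + k.+1 <= N.+1)%N -> H (p + k.+1)%N < H p.
    elim=> [|k IH] h.
      have [_ +] := hs p pN; move=> /(_ (leqnn _)); rewrite -hd subr_lt0.
      by rewrite addn1.
    have := IH ltac:(lia).
    have [_ +] := hs (p + k.+1)%N ltac:(lia); move=> /(_ ltac:(lia)).
    rewrite -hd subr_lt0 => h1 h2; rewrite [(p + _)%N]addnS; exact: lt_trans h1 h2.
  have -> : s = (p + (s - p.+1).+1)%N by lia.
  apply: key; lia.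
Qed.

Lemma side_next k X : cross (dir n v k) (psub X (V n v k.+1)) = side n v k X.
Proof. rewrite /side /dir /cross /psub /=; ring. Qed.

Lemma cross_anti (p q : R * R) : cross p q = - cross q p.
Proof. rewrite /cross; ring. Qed.

Lemma unimodal e : exists p, (1 <= p <= n - 2)%N /\ forall s, (s <= n - 2)%N ->
  ((s < p)%N -> 0 < cross (dir n v (e + s.+1)) (dir n v e)) /\
  ((p <= s)%N -> cross (dir n v (e + s.+1)) (dir n v e) < 0).
Proof.
have h3 := n3.
apply: (@signs_switch (fun s => cross (dir n v (e + s.+1)) (dir n v e)) (n - 2)%N).
- rewrite /= -side_step addn1 side_self1.
  have -> : (e.+1).+1 = (e + 2)%N by rewrite addn2.
  have := side_shift_lt e 2 ltac:(lia); lra.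
- rewrite /= -side_step.
  have -> : (e + (n - 2).+1).+1 = (e + n)%N by rewrite -addnS; congr addn; lia.
  rewrite V_addn side_self.
  have := side_shift_lt e (n - 2).+1 ltac:(lia); lra.
- move=> s sN /=.
  have hne : (e %% n != (e + s.+1) %% n)%N by rewrite eq_sym; apply: modD_neq; lia.
  have n0 : (0 < n)%N by lia.
  have := Hnp (e %% n)%N ((e + s.+1) %% n)%N (ltn_pmod _ n0) (ltn_pmod _ n0) hne.
  rewrite (dir_eqmod _ _ (modn_mod e n)) (dir_eqmod _ _ (modn_mod _ n)).
  by rewrite cross_anti oppr_eq0.
- move=> s sN /= [neg pos].
  set k := (e + s.+1)%N.
  have ek : (e + s.+2)%N = k.+1 by rewrite /k addnS.
  rewrite ek in pos.
  have := @cone _ _ (psub (V n v e) (V n v k.+1)) (- (dir n v e).1, - (dir n v e).2) (turn k).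
  rewrite side_next -/(side n v k.+1 (V n v e)).
  move=> /(_ (side_V_le _ _) (side_V_le _ _)).
  have -> : cross (dir n v k) (- (dir n v e).1, - (dir n v e).2) = - cross (dir n v k) (dir n v e) by rewrite /cross /=; ring.
  have -> : cross (dir n v k.+1) (- (dir n v e).1, - (dir n v e).2) = - cross (dir n v k.+1) (dir n v e) by rewrite /cross /=; ring.
  have -> : cross (psub (V n v e) (V n v k.+1)) (- (dir n v e).1, - (dir n v e).2) = - side n v e (V n v k.+1) by rewrite /side /cross /psub /=; ring.
  have := side_shift_lt e s.+2 ltac:(lia); rewrite ek.
  move=> h1 h2; have := h2 ltac:(lra) ltac:(lra); lra.
Qed.

Lemma side_seg k q t : side n v k (seg_pt n v q t) =
  (1 - t) * side n v k (V n v q) + t * side n v k (V n v q.+1).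
Proof. rewrite /side /seg_pt /dir /cross /psub /=; ring. Qed.

Lemma side_modn k X : side n v (k %% n) X = side n v k X.
Proof. exact: side_eqmod (modn_mod k n). Qed.

Lemma inP_side X k : inP n v X -> side n v k X <= 0.
Proof.
move=> h; rewrite -side_modn; apply: h; apply: ltn_pmod; have := n3; lia.
Qed.

Lemma seg_in_P q t : 0 <= t <= 1 -> inP n v (seg_pt n v q t).
Proof.
case/andP=> t0 t1 k _; rewrite side_seg.
have := side_V_le k q; have := side_V_le k q.+1; nra.
Qed.

Lemma certif i j (Z : R * R) q :
  let a0 := - side n v i Z in let b0 := - side n v j Z in
  let w := (b0 * (dir n v i).1 + a0 * (dir n v j).1,
            b0 * (dir n v i).2 + a0 * (dir n v j).2) in
  0 <= cross (dir n v q) w -> cross (dir n v q.+1) w <= 0 ->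
  cross (psub Z (V n v q.+1)) w = 0 ->
  forall X, inP n v X -> b0 * (- side n v i X) + a0 * (- side n v j X) <= 2 * a0 * b0.
Proof.
move=> a0 b0 w h1 h2 h3 X hX.
have := @cone (dir n v q) (dir n v q.+1) (psub X (V n v q.+1)) w (turn q).
rewrite side_next -/(side n v q.+1 X) => /(_ (inP_side _ _ hX) (inP_side _ _ hX) h1 h2).
have id : cross (psub X (V n v q.+1)) w - cross (psub Z (V n v q.+1)) w =
   b0 * (side n v i Z - side n v i X) + a0 * (side n v j Z - side n v j X).
  rewrite /w /side /cross /psub /=; ring.
rewrite h3 subr0 in id; rewrite id /a0 /b0; nra.
Qed.

Lemma amgm (a0 b0 x y : R) : 0 < a0 -> 0 < b0 -> 0 <= x -> 0 <= y ->
  b0 * x + a0 * y <= 2 * a0 * b0 ->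
  x * y <= a0 * b0 /\ (x * y = a0 * b0 -> x = a0 /\ y = b0).
Proof.
move=> ha hb hx hy h.
set u := b0 * x; set w := a0 * y; set m := a0 * b0.
have hu : 0 <= u by rewrite /u; nra.
have hw : 0 <= w by rewrite /w; nra.
have hm : 0 < m by rewrite /m; nra.
have huw : u * w = m * (x * y) by rewrite /u /w /m; ring.
have h' : u + w <= 2 * m by rewrite /u /w /m; lra.
have key : u * w <= m * m.
  have s1 : 0 <= (u - w) ^+ 2 := sqr_ge0 _.
  have s2 : (u + w) * (u + w) <= (2 * m) * (2 * m).
    apply: ler_pM => //; lra.
  nra.
split.
  have : m * (x * y) <= m * m by rewrite -huw.
  rewrite ler_pM2l // /m => //.
move=> e.
have e2 : u * w = m * m by rewrite huw e.
have euw : u = w by nra.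
have eu : u = m.
  have : (u - m) * (u + m) = 0 by rewrite -euw in e2; nra.
  move/eqP; rewrite mulf_eq0 => /orP [|/eqP]; first by rewrite subr_eq0 => /eqP.
  lra.
split.
  by apply: (mulfI (lt0r_neq0 hb)); rewrite -/u eu /m mulrC.
by apply: (mulfI (lt0r_neq0 ha)); rewrite -/w -euw eu.
Qed.

Lemma pt_eq (d1 d2 X Y : R * R) : cross d1 d2 != 0 ->
  cross d1 (psub X Y) = 0 -> cross d2 (psub X Y) = 0 -> X = Y.
Proof.
move=> hc h1 h2.
have e1 : cross d1 d2 * (X.1 - Y.1) = d2.1 * cross d1 (psub X Y) - d1.1 * cross d2 (psub X Y)
  by rewrite /cross /psub /=; ring.
have e2 : cross d1 d2 * (X.2 - Y.2) = d2.2 * cross d1 (psub X Y) - d1.2 * cross d2 (psub X Y)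
  by rewrite /cross /psub /=; ring.
rewrite h1 h2 !mulr0 subr0 in e1 e2.
move/eqP: e1; rewrite mulf_eq0 (negbTE hc) /= subr_eq0 => /eqP e1.
move/eqP: e2; rewrite mulf_eq0 (negbTE hc) /= subr_eq0 => /eqP e2.
clear h1 h2; by case: X Y e1 e2 => x1 x2 [y1 y2] /= -> ->.
Qed.

Lemma side_diff k X Y : side n v k X - side n v k Y = cross (dir n v k) (psub X Y).
Proof. rewrite /side /cross /psub /=; ring. Qed.

Lemma Ipt_side_i i k : side n v i (Ipt n v i k) = 0.
Proof. rewrite /Ipt /side /seg_pt /cross /psub /=; ring. Qed.

Lemma Ipt_side_k i k : cross (dir n v i) (dir n v k) != 0 -> side n v k (Ipt n v i k) = 0.
Proof.
move=> h; rewrite /Ipt /Iparam /side /seg_pt /cross /psub /=.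
move: h; rewrite /cross /psub /= => h.
by field.
Qed.

Lemma Ipt_unique i k X : cross (dir n v i) (dir n v k) != 0 ->
  side n v i X = 0 -> side n v k X = 0 -> Ipt n v i k = X.
Proof.
move=> h hi hk; apply: (pt_eq _ _ _ _ h).
  by rewrite -side_diff Ipt_side_i hi subrr.
by rewrite -side_diff Ipt_side_k // hk subrr.
Qed.

Lemma midpt i j k Z :
  let a0 := - side n v i Z in let b0 := - side n v j Z in
  cross (dir n v i) (dir n v k) != 0 -> cross (dir n v j) (dir n v k) != 0 ->
  side n v k Z = 0 ->
  b0 * cross (dir n v k) (dir n v i) + a0 * cross (dir n v k) (dir n v j) = 0 ->
  Z = midpoint (Ipt n v i k) (Ipt n v j k).
Proof.
move=> a0 b0 hik hjk hk ht.
set al := cross (dir n v k) (dir n v i).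
set be := cross (dir n v k) (dir n v j).
have hal : al != 0 by rewrite /al cross_anti oppr_eq0.
have hbe : be != 0 by rewrite /be cross_anti oppr_eq0.
set d := dir n v k.
have -> : Ipt n v i k = (Z.1 - a0 / al * d.1, Z.2 - a0 / al * d.2).
  apply: Ipt_unique => //.
    have := side_diff i (Z.1 - a0 / al * d.1, Z.2 - a0 / al * d.2) Z.
    have -> : cross (dir n v i) (psub (Z.1 - a0 / al * d.1, Z.2 - a0 / al * d.2) Z)
        = a0 / al * al.
      by rewrite /al /d /cross /psub /=; ring.
    rewrite divfK // /a0; lra.
  have := side_diff k (Z.1 - a0 / al * d.1, Z.2 - a0 / al * d.2) Z.
  have -> : cross (dir n v k) (psub (Z.1 - a0 / al * d.1, Z.2 - a0 / al * d.2) Z) = 0.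
    by rewrite /d /cross /psub /=; ring.
  rewrite hk; lra.
have -> : Ipt n v j k = (Z.1 - b0 / be * d.1, Z.2 - b0 / be * d.2).
  apply: Ipt_unique => //.
    have := side_diff j (Z.1 - b0 / be * d.1, Z.2 - b0 / be * d.2) Z.
    have -> : cross (dir n v j) (psub (Z.1 - b0 / be * d.1, Z.2 - b0 / be * d.2) Z)
        = b0 / be * be.
      by rewrite /be /d /cross /psub /=; ring.
    rewrite divfK // /b0; lra.
  have := side_diff k (Z.1 - b0 / be * d.1, Z.2 - b0 / be * d.2) Z.
  have -> : cross (dir n v k) (psub (Z.1 - b0 / be * d.1, Z.2 - b0 / be * d.2) Z) = 0.
    by rewrite /d /cross /psub /=; ring.
  rewrite hk; lra.
have hs : a0 / al + b0 / be = 0.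
  have -> : a0 / al + b0 / be = (b0 * al + a0 * be) / (al * be) by field; apply/andP.
  by rewrite ht mul0r.
clearbody d al be.
rewrite /midpoint /=.
have E1 : (Z.1 - a0 / al * d.1 + (Z.1 - b0 / be * d.1)) / 2 = Z.1.
  have -> : (Z.1 - a0 / al * d.1 + (Z.1 - b0 / be * d.1)) / 2 =
     Z.1 - (a0 / al + b0 / be) * d.1 / 2 by field; rewrite hal hbe.
  by rewrite hs !mul0r subr0.
have E2 : (Z.2 - a0 / al * d.2 + (Z.2 - b0 / be * d.2)) / 2 = Z.2.
  have -> : (Z.2 - a0 / al * d.2 + (Z.2 - b0 / be * d.2)) / 2 =
     Z.2 - (a0 / al + b0 / be) * d.2 / 2 by field; rewrite hal hbe.
  by rewrite hs !mul0r subr0.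
rewrite E1 E2; exact: surjective_pairing.
Qed.

Lemma eqmodS x y : (x %% n)%N = (y %% n)%N -> (x.+1 %% n)%N = (y.+1 %% n)%N.
Proof. by move=> h; rewrite -[x.+1]addn1 -[y.+1]addn1 -modnDml h modnDml. Qed.

Lemma seg_sub_k k (u : R) : cross (psub (seg_pt n v k u) (V n v k)) (dir n v k.+1)
  = u * cross (dir n v k) (dir n v k.+1).
Proof. rewrite /seg_pt /cross /psub /=; ring. Qed.

Lemma seg_sub_k1 k (u : R) : cross (psub (seg_pt n v k u) (V n v k.+1)) (dir n v k.+1)
  = (u - 1) * cross (dir n v k) (dir n v k.+1).
Proof. rewrite /seg_pt /dir /cross /psub /=; ring. Qed.

Lemma seg0 q : seg_pt n v q 0 = V n v q.
Proof.
rewrite /seg_pt !mul0r !addr0; exact: esym (surjective_pairing _).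
Qed.

Lemma conv0 (t x y : R) : 0 < t < 1 -> x <= 0 -> y <= 0 ->
  (1 - t) * x + t * y = 0 -> x = 0 /\ y = 0.
Proof. move=> /andP [h1 h2] hx hy e; split; nra. Qed.

Lemma edge_unique q (t : R) k Z : 0 <= t < 1 -> Z = seg_pt n v q t -> (k < n)%N ->
  in_edge n v k Z -> 0 < t /\ k = (q %% n)%N.
Proof.
move=> /andP [t0 t1] -> kn [u /andP [u0 u1] e].
have hk : side n v k (seg_pt n v q t) = 0.
  by rewrite e /side /seg_pt /cross /psub /=; ring.
rewrite side_seg in hk.
have l1 := side_V_le k q; have l2 := side_V_le k q.+1.
have tk := turn k.
have h3 := n3.
case: (eqVneq t 0) => [t0'|tn0].
  move: hk e; rewrite t0' subr0 mul1r mul0r addr0 seg0 => hk e.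
  case: (side_V_zero _ _ hk) => hq.
    have := seg_sub_k k u; rewrite -e (V_eqmod _ _ hq).
    have -> : cross (psub (V n v k) (V n v k)) (dir n v k.+1) = 0.
      by rewrite /cross /psub /=; ring.
    by move=> h0; have := tk; rewrite -(pmulr_rlt0 _ u0) -h0 ltxx.
  have := seg_sub_k1 k u; rewrite -e (V_eqmod _ _ hq).
  have -> : cross (psub (V n v k.+1) (V n v k.+1)) (dir n v k.+1) = 0.
    by rewrite /cross /psub /=; ring.
  have u1' : u - 1 < 0 by rewrite subr_lt0.
  by move=> h0; have := tk; rewrite -(nmulr_rgt0 _ u1') -h0 ltxx.
have tp : 0 < t by rewrite lt_neqAle eq_sym tn0.
split => //.
have tt : 0 < t < 1 by rewrite tp t1.
have [z1 z2] := conv0 t _ _ tt l1 l2 hk.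
have kk : k = (k %% n)%N by rewrite modn_small.
case: (side_V_zero _ _ z1) => hq1; first by rewrite hq1.
exfalso.
have hs := eqmodS _ _ hq1.
case: (side_V_zero _ _ z2) => hq2.
  have := modD_neq k 2 h3.
  by rewrite addn2 -hs hq2 eqxx.
have := modD_neq q 1 (ltnW h3).
by rewrite addn1 hq2 hq1 eqxx.
Qed.

Lemma modcase u : (u < 2 * n)%N ->
  ((u < n)%N /\ (u %% n)%N = u) \/ ((n <= u)%N /\ (u %% n)%N = (u - n)%N).
Proof.
case: (ltnP u n) => h hu; first by left; rewrite modn_small.
right; split => //.
have {1}-> : u = ((u - n) + n)%N by rewrite subnK.
rewrite modnDr modn_small //; lia.
Qed.

Lemma shift_surj x m : (m < n)%N -> exists s, (s < n)%N /\ ((x + s) %% n)%N = m.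
Proof.
have h3 := n3.
move=> mn; exists ((m + n - x %% n) %% n)%N; split; first by apply: ltn_pmod; lia.
rewrite modnDmr -modnDml.
have hx : (x %% n < n)%N by apply: ltn_pmod; lia.
have -> : (x %% n + (m + n - x %% n))%N = (m + n)%N by lia.
by rewrite modnDr modn_small.
Qed.

Lemma nle (x y : nat) : (x <= y)%N -> (x%:R : R) <= y%:R.
Proof. by rewrite ler_nat. Qed.
Lemma nlt1 (x y : nat) : (x < y)%N -> (x%:R : R) + 1 <= y%:R.
Proof. by rewrite natr1 ler_nat. Qed.

Lemma fin_closed (ma mb mc : nat) (ty : R) : 0 <= ty < 1 -> (mb = mc -> ty = 0) ->
  (((ma <= mc)%N /\ (ma <= mb)%N /\ (mb <= mc)%N) \/
   ((mc < ma)%N /\ ((ma <= mb)%N \/ (mb <= mc)%N))) ->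
  let a := (ma%:R : R) in let b := mb%:R + ty in let c := (mc%:R : R) in
  (a <= c /\ a <= b <= c) \/ (c < a /\ (a <= b \/ b <= c)).
Proof.
move=> /andP [t0 t1] hbc H a b c.
have bc : (mb <= mc)%N -> b <= c.
  rewrite leq_eqVlt => /orP [/eqP e|lt].
    by rewrite /b /c (hbc e) e addr0.
  have := nlt1 _ _ lt; rewrite /b /c; lra.
have ab : (ma <= mb)%N -> a <= b.
  move=> /nle; rewrite /a /b; lra.
case: H => [[h1 [h2 h3]]|[h1 [h2|h2]]].
- left; split; first exact: nle.
  by rewrite ab //= bc.
- right; split; first by rewrite /a /c ltr_nat.
  by left; apply: ab.
- right; split; first by rewrite /a /c ltr_nat.
  by right; apply: bc.
Qed.

Lemma fin_open (ma mb mc : nat) (ty : R) : 0 <= ty < 1 -> (ma = mb -> 0 < ty) ->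
  (((ma <= mc)%N /\ (ma <= mb)%N /\ (mb < mc)%N) \/
   ((mc < ma)%N /\ ((ma <= mb)%N \/ (mb < mc)%N))) ->
  let a := (ma%:R : R) in let b := mb%:R + ty in let c := (mc%:R : R) in
  (a <= c /\ a < b < c) \/ (c < a /\ (a < b \/ b < c)).
Proof.
move=> /andP [t0 t1] hab H a b c.
have bc : (mb < mc)%N -> b < c.
  move=> /nlt1; rewrite /b /c; lra.
have ab : (ma <= mb)%N -> a < b.
  rewrite leq_eqVlt => /orP [/eqP e|lt].
    by rewrite /a /b -e ltrDl hab.
  have := nlt1 _ _ lt; rewrite /a /b; lra.
case: H => [[h1 [h2 h3]]|[h1 [h2|h2]]].
- left; split; first exact: nle.
  by rewrite ab //= bc.
- right; split; first by rewrite /a /c ltr_nat.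
  by left; apply: ab.
- right; split; first by rewrite /a /c ltr_nat.
  by right; apply: bc.
Qed.

Lemma cyc_nat_closed i sx sy sz : (i < n)%N -> (0 < sx)%N -> (sx <= sy)%N ->
  (sy < n)%N -> (sz <= n)%N -> (sy <= sz)%N ->
  (((i + sx) %% n <= (i + sz) %% n)%N /\ ((i + sx) %% n <= (i + sy) %% n)%N /\
   ((i + sy) %% n <= (i + sz) %% n)%N) \/
  (((i + sz) %% n < (i + sx) %% n)%N /\ (((i + sx) %% n <= (i + sy) %% n)%N \/
   ((i + sy) %% n <= (i + sz) %% n)%N)).
Proof.
move=> hi h0 hxy hy hz hyz.
have [[h1 e1]|[h1 e1]] := modcase (i + sx) ltac:(lia);
have [[h2 e2]|[h2 e2]] := modcase (i + sy) ltac:(lia);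
have [[h3 e3]|[h3 e3]] := modcase (i + sz) ltac:(lia);
rewrite e1 e2 e3; clear e1 e2 e3; lia.
Qed.

Lemma cyc_nat_open i sx sy sz : (i < n)%N -> (0 < sx)%N -> (sx <= sy)%N ->
  (sy < sz)%N -> (sz <= n)%N ->
  (((i + sx) %% n <= (i + sz) %% n)%N /\ ((i + sx) %% n <= (i + sy) %% n)%N /\
   ((i + sy) %% n < (i + sz) %% n)%N) \/
  (((i + sz) %% n < (i + sx) %% n)%N /\ (((i + sx) %% n <= (i + sy) %% n)%N \/
   ((i + sy) %% n < (i + sz) %% n)%N)).
Proof.
move=> hi h0 hxy hyz hz.
have [[h1 e1]|[h1 e1]] := modcase (i + sx) ltac:(lia);
have [[h2 e2]|[h2 e2]] := modcase (i + sy) ltac:(lia);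
have [[h3 e3]|[h3 e3]] := modcase (i + sz) ltac:(lia);
rewrite e1 e2 e3; clear e1 e2 e3; lia.
Qed.

Lemma mod_inj_lt i x y : (i < n)%N -> (x < y)%N -> (y <= n)%N -> (0 < x \/ y < n)%N ->
  ((i + x) %% n)%N <> ((i + y) %% n)%N.
Proof.
move=> hi hxy hy h.
have [[h1 e1]|[h1 e1]] := modcase (i + x) ltac:(lia);
have [[h2 e2]|[h2 e2]] := modcase (i + y) ltac:(lia);
rewrite e1 e2; clear e1 e2; lia.
Qed.

Lemma cyc_closed i sx sy sz (ty : R) : (i < n)%N -> (0 < sx)%N -> (sx <= sy)%N ->
  (sy < n)%N -> (sz <= n)%N -> 0 <= ty < 1 ->
  ((sy < sz)%N \/ (sy = sz /\ ty = 0)) ->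
  let a := (((i + sx) %% n)%N)%:R in let b := (((i + sy) %% n)%N)%:R + ty in
  let c := (((i + sz) %% n)%N)%:R in
  (a <= c /\ a <= b <= c) \/ (c < a /\ (a <= b \/ b <= c)).
Proof.
move=> hi h0 hxy hy hz ht hyz.
apply: fin_closed => //.
  case: hyz => [lt|[-> ->]] // e; exfalso.
  exact: (mod_inj_lt i sy sz hi lt hz (or_introl (leq_trans h0 hxy)) e).
apply: cyc_nat_closed => //.
by case: hyz => [/ltnW|[->]].
Qed.

Lemma cyc_open i sx sy sz (ty : R) : (i < n)%N -> (0 < sx)%N -> (sx <= sy)%N ->
  (sy < sz)%N -> (sz <= n)%N -> 0 <= ty < 1 ->
  ((sx < sy)%N \/ (sx = sy /\ 0 < ty)) ->
  let a := (((i + sx) %% n)%N)%:R in let b := (((i + sy) %% n)%N)%:R + ty in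
  let c := (((i + sz) %% n)%N)%:R in
  (a <= c /\ a < b < c) \/ (c < a /\ (a < b \/ b < c)).
Proof.
move=> hi h0 hxy hyz hz ht hxy'.
apply: fin_open => //.
  case: hxy' => [lt|[-> ->]] // e; exfalso.
  exact: (mod_inj_lt i sx sy hi lt (ltnW (leq_trans hyz hz)) (or_introl h0) e).
exact: cyc_nat_open.
Qed.

Lemma seg_mod x (t : R) : seg_pt n v (x %% n) t = seg_pt n v x t.
Proof. by rewrite /seg_pt V_mod (dir_eqmod _ _ (modn_mod x n)). Qed.

Lemma n0 : (0 < n)%N. Proof. have := n3; lia. Qed.

Lemma bparam_seg x (t : R) : 0 <= t < 1 ->
  bparam n v ((((x %% n)%N)%:R) + t) (seg_pt n v x t).
Proof.
move=> ht; exists (x %% n)%N, t; split => //; first exact: ltn_pmod n0.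
by rewrite seg_mod.
Qed.

Lemma bparam_V x : bparam n v (((x %% n)%N)%:R) (V n v x).
Proof.
have := bparam_seg x 0 ltac:(by rewrite lexx ltr01).
by rewrite addr0 seg0.
Qed.

Lemma side_seg_self x (t : R) : side n v x (seg_pt n v x t) = 0.
Proof. rewrite /side /seg_pt /cross /psub /=; ring. Qed.

Lemma pnorm_pos k : 0 < pnorm (dir n v k).
Proof.
rewrite /pnorm sqrtr_gt0.
have := turn k; rewrite /cross.
set x := (dir n v k).1; set y := (dir n v k).2 => h.
case: (eqVneq x 0) => hx.
  case: (eqVneq y 0) => hy.
    by move: h; rewrite hx hy !mul0r subrr ltxx.
  have : 0 < y ^+ 2 by rewrite lt_neqAle sqr_ge0 andbT eq_sym sqrf_eq0.
  have := sqr_ge0 x; lra.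
have : 0 < x ^+ 2 by rewrite lt_neqAle sqr_ge0 andbT eq_sym sqrf_eq0.
have := sqr_ge0 y; lra.
Qed.

Lemma dist_eq e X : side n v e X <= 0 ->
  dist_line n v e X = - side n v e X / pnorm (dir n v e).
Proof. by move=> h; rewrite /dist_line ler0_norm. Qed.

Lemma isD_gen e p : (1 <= p <= n - 2)%N /\ (forall s, (s <= n - 2)%N ->
  ((s < p)%N -> 0 < cross (dir n v (e + s.+1)) (dir n v e)) /\
  ((p <= s)%N -> cross (dir n v (e + s.+1)) (dir n v e) < 0)) ->
  isD n v e ((e + p.+1) %% n)%N.
Proof.
case=> hp H; split; first exact: ltn_pmod n0.
move=> m mn mne.
have [s [sn es]] := shift_surj e.+1 m mn.
have hpk := @peak (fun s => - side n v e (V n v (e + s.+1)))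
   (fun s => cross (dir n v (e + s.+1)) (dir n v e)) (n - 2)%N p.
have hd : forall s0, (- side n v e (V n v (e + s0.+2))) - (- side n v e (V n v (e + s0.+1)))
    = cross (dir n v (e + s0.+1)) (dir n v e).
  by move=> s0; rewrite -side_step (addnS e s0.+1); lra.
have := hpk hd ltac:(lia) H s ltac:(lia).
have sp : s != p.
  apply/eqP => sp; move: mne; rewrite -es sp addSnnS eqxx //.
move=> /(_ sp).
rewrite !dist_eq ?side_V_le // ltr_pM2r ?invr_gt0 ?pnorm_pos //.
by rewrite -es V_mod V_mod addSnnS.
Qed.

Lemma cross_w (d : R * R) a0 b0 i j :
  cross d (b0 * (dir n v i).1 + a0 * (dir n v j).1, b0 * (dir n v i).2 + a0 * (dir n v j).2)
  = b0 * cross d (dir n v i) + a0 * cross d (dir n v j).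
Proof. rewrite /cross /=; ring. Qed.

Lemma disprod_eq i j X : inP n v X -> disprod n v i j X =
  (- side n v i X) * (- side n v j X) * (pnorm (dir n v i) * pnorm (dir n v j))^-1.
Proof.
move=> hX; rewrite /disprod !dist_eq ?inP_side //.
rewrite invfM; ring.
Qed.

Section Main.
Variables (i j J pI pJ : nat).
Hypothesis hi : (i < n)%N.
Hypothesis hj : (j < n)%N.
Hypothesis hij : i != j.
Hypothesis hch : chases n v i j.
Hypothesis hJ : (0 < J < n)%N.
Hypothesis hJm : (i + J = j %[mod n])%N.
Hypothesis hpI : (1 <= pI <= n - 2)%N /\ forall s, (s <= n - 2)%N ->
  ((s < pI)%N -> 0 < cross (dir n v (i + s.+1)) (dir n v i)) /\
  ((pI <= s)%N -> cross (dir n v (i + s.+1)) (dir n v i) < 0).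
Hypothesis hpJ : (1 <= pJ <= n - 2)%N /\ forall s, (s <= n - 2)%N ->
  ((s < pJ)%N -> 0 < cross (dir n v (j + s.+1)) (dir n v j)) /\
  ((pJ <= s)%N -> cross (dir n v (j + s.+1)) (dir n v j) < 0).

Let a_ s := - side n v i (V n v (i + s)).
Let b_ s := - side n v j (V n v (i + s)).
Let al s := cross (dir n v (i + s)) (dir n v i).
Let be s := cross (dir n v (i + s)) (dir n v j).
Let psiO s := al s * b_ s + be s * a_ s.
Let psiI s := al s * b_ s.+1 + be s * a_ s.+1.
Let c := cross (dir n v i) (dir n v j).

Lemma n3' : (2 < n)%N. Proof. exact: n3. Qed.

Lemma jmod m : (i + J + m = j + m %[mod n])%N.
Proof.
have := congr1 (fun x => (x + m) %% n)%N hJm; by rewrite /= !modnDml.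
Qed.
Lemma jV m : V n v (i + J + m) = V n v (j + m).
Proof. exact: V_eqmod (jmod m). Qed.
Lemma jD m : dir n v (i + J + m) = dir n v (j + m).
Proof. exact: dir_eqmod (jmod m). Qed.
Lemma Vn : V n v (i + n) = V n v i.
Proof. exact: V_addn. Qed.
Lemma Dn : dir n v (i + n) = dir n v i.
Proof. by apply: dir_eqmod; rewrite modnDr. Qed.

Lemma chase_c : c < 0 /\ 0 < - side n v j (V n v i).
Proof.
have cnz : c != 0 := Hnp i j hi hj hij.
move: hch; rewrite /chases /Iparam -/c.
set q := cross _ _ => hq.
have e1 : side n v j (V n v i) = q by rewrite /q /side /cross /psub /=; ring.
have e2 := side_step j i; rewrite -/c e1 in e2.
have l1 := side_V_le j i; have l2 := side_V_le j i.+1.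
rewrite e1 in l1.
case: (ltgtP c 0) => hc; last by rewrite hc eqxx in cnz.
  move: hq; rewrite ler_ndivlMr // mul1r => hq; split => //; lra.
move: hq; rewrite ler_pdivlMr // mul1r => hq; lra.
Qed.

Lemma alpha_pos s : (1 <= s <= pI)%N -> 0 < al s.
Proof.
case: hpI => hp H; case: s => [//|s] /= hs.
have [+ _] := H s ltac:(lia); apply; lia.
Qed.

Lemma alpha_neg s : (pI < s)%N -> (s < n)%N -> al s < 0.
Proof.
case: hpI => hp H; case: s => [//|s] /= h1 h2.
have [_ +] := H s ltac:(lia); apply; lia.
Qed.

Lemma beta_pos s : (J < s)%N -> (s <= J + pJ)%N -> 0 < be s.
Proof.
case: hpJ => hp H => h1 h2.
have -> : s = (J + (s - J.+1).+1)%N by lia.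
rewrite /be addnA jD.
have [+ _] := H (s - J.+1)%N ltac:(lia); apply; lia.
Qed.

Lemma beta_neg s : (J + pJ < s)%N -> (s < n)%N -> be s < 0.
Proof.
case: hpJ => hp H => h1 h2.
have -> : s = (J + (s - J.+1).+1)%N by lia.
rewrite /be addnA jD.
have [_ +] := H (s - J.+1)%N ltac:(lia); apply; lia.
Qed.

Lemma a_pos s : (1 < s < n)%N -> 0 < a_ s.
Proof. move=> h; rewrite /a_; have := side_shift_lt i s h; lra. Qed.

Lemma b_pos s : (J.+1 < s)%N -> (s <= n)%N -> 0 < b_ s.
Proof.
move=> h1 h2; rewrite /b_.
case: (ltngtP s n) => [lt|gt|->]; last by rewrite Vn; case: chase_c.
  have -> : (i + s = i + J + (s - J))%N by lia.
  rewrite jV; have := side_shift_lt j (s - J) ltac:(lia); lra.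
by rewrite ltnNge h2 in gt.
Qed.

Lemma a_step s : a_ s.+1 = a_ s + al s.
Proof. rewrite /a_ /al -side_step addnS; lra. Qed.
Lemma b_step s : b_ s.+1 = b_ s + be s.
Proof. rewrite /b_ /be -side_step addnS; lra. Qed.
Lemma a_ge0 s : 0 <= a_ s.
Proof. rewrite /a_ oppr_ge0; exact: side_V_le. Qed.
Lemma b_ge0 s : 0 <= b_ s.
Proof. rewrite /b_ oppr_ge0; exact: side_V_le. Qed.
Lemma b_J1 : b_ J.+1 = 0.
Proof. by rewrite /b_ -addn1 addnA jV addn1 side_self1 oppr0. Qed.
Lemma a_n : a_ n = 0.
Proof. by rewrite /a_ Vn side_self oppr0. Qed.
Lemma al_n : al n = 0.
Proof. rewrite /al Dn /cross; ring. Qed.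

Lemma F1 : (J <= n - 2)%N.
Proof.
case: (leqP J (n - 2)) => // h; exfalso.
have e : J.+1 = n by lia.
have := b_J1; rewrite e /b_ Vn; case: chase_c => _; lra.
Qed.

Lemma F2 : (J <= pI)%N.
Proof.
case: (leqP J pI) => // h; exfalso.
have := alpha_neg J h ltac:(lia).
rewrite /al -[(i + J)%N]addn0 jD addn0 cross_anti -/c; case: chase_c => hc _; lra.
Qed.

Lemma F3 : (pJ <= n - J.+1)%N.
Proof.
case: hpJ => hp H.
have h1 := F1.
have [h2 _] := H (n - J.+1)%N ltac:(lia).
case: (leqP pJ (n - J.+1)) => // lt; exfalso.
have := h2 lt.
have -> : (j + (n - J.+1).+1)%N = (j + (n - J))%N by congr addn; lia.
rewrite -jD.
have -> : (i + J + (n - J))%N = (i + n)%N by lia.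
rewrite Dn -/c; case: chase_c => hc _; lra.
Qed.

Lemma trans_k k : (1 <= k)%N -> (J + k <= pI)%N ->
  cross (dir n v (i + J)) (dir n v (i + J + k)) < 0.
Proof.
elim: k => [//|k IH] _ hk.
case: (posnP k) => [->|kp].
  by rewrite addn1; apply: turn.
have h1 := IH kp ltac:(lia).
apply: (hp_trans _ _ _ (dir n v i) h1).
- by rewrite addnS; apply: turn.
- apply: (alpha_pos J); have := F2; lia.
- rewrite -addnA; apply: (alpha_pos (J + k)); lia.
- rewrite -addnA; apply: (alpha_pos (J + k.+1)); lia.
Qed.

Lemma F4 : (pI <= J + pJ)%N.
Proof.
case: (leqP pI (J + pJ)) => // lt; exfalso.
have := trans_k pJ.+1 isT ltac:(lia).
have := beta_neg (J + pJ.+1) ltac:(lia) ltac:(case: hpI => ? _; lia).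
rewrite /be -[dir n v j]/(dir n v j) -[j]addn0 -jD addn0 addnA.
rewrite cross_anti; lra.
Qed.


Lemma search :
  (exists r, [/\ (pI < r.+1 <= J + pJ.+1)%N, (J.+2 <= r.+1 < n)%N,
     0 <= psiI r & psiO r.+1 <= 0]) \/
  (exists e, [/\ (pI < e)%N, (e < J + pJ.+1)%N, 0 < psiO e & psiI e < 0]).
Proof.
have f1 := F1; have f2 := F2; have f3 := F3; have f4 := F4.
have [hp1 _] := hpI; have [hp2 _] := hpJ.
have h3 := n3'.
have PB : (pI < J + pJ.+1)%N && (psiO (J + pJ.+1) <= 0).
  apply/andP; split; first by lia.
  case: (ltngtP (J + pJ.+1) n) => [lt|gt|eq].
  - have h1 := alpha_neg (J + pJ.+1) ltac:(lia) lt.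
    have h2 := beta_neg (J + pJ.+1) ltac:(lia) lt.
    have h5 := a_pos (J + pJ.+1) ltac:(lia).
    have h6 := b_pos (J + pJ.+1) ltac:(lia) ltac:(lia).
    rewrite /psiO; nra.
  - exfalso; lia.
  - by rewrite eq /psiO al_n a_n mul0r mulr0 addr0.
have ex : exists s, (pI < s)%N && (psiO s <= 0) by exists (J + pJ.+1)%N.
case: (ex_minnP ex) => s /andP [hs1 hs2] hmin.
have sB : (s <= J + pJ.+1)%N := hmin _ PB.
case: (eqVneq s pI.+1) => [es|ns].
  have JpI : (J < pI)%N.
    case: (ltnP J pI) => // h; have eJ : pI = J by lia.
    exfalso; move: hs2; rewrite es eJ /psiO b_J1 mulr0 add0r.
    have hb := beta_pos J.+1 ltac:(lia) ltac:(lia).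
    have ha := a_pos J.+1 ltac:(lia).
    have := mulr_gt0 hb ha; lra.
  left; exists pI; split; try lia; last by rewrite -es.
  have h1 := alpha_pos pI ltac:(lia).
  have h2 := beta_pos pI JpI ltac:(lia).
  have h5 := a_pos pI.+1 ltac:(lia).
  have h6 := b_pos pI.+1 ltac:(lia) ltac:(lia).
  rewrite /psiI; have := mulr_gt0 h1 h6; have := mulr_gt0 h2 h5; lra.
have [e es] : exists e, s = e.+1 by exists s.-1; lia.
have he : (pI < e)%N by lia.
have hOe : 0 < psiO e.
  have : ~~ ((pI < e)%N && (psiO e <= 0)).
    by apply/negP => /hmin; lia.
  by rewrite he /= -ltNge.
case: (ltP (psiI e) 0) => hI.
  by right; exists e; split => //; lia.
have en : (e.+1 < n)%N.
  case: (ltngtP e.+1 n) => [//|gt|eq]; first by exfalso; lia.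
  exfalso; move: hI; rewrite /psiI eq a_n mulr0 addr0.
  have h1 := alpha_neg e he ltac:(lia).
  have h2 := b_pos n ltac:(lia) (leqnn _).
  have : al e * b_ n < 0 by rewrite nmulr_rlt0.
  lra.
left; exists e; split => //; try lia; by rewrite -es.
Qed.


Definition concl (Z : R * R) :=
  [/\ inP n v Z,
      (forall Y, inP n v Y -> disprod n v i j Y <= disprod n v i j Z),
      (forall Y, inP n v Y -> disprod n v i j Y = disprod n v i j Z -> Y = Z),
      on_boundary n v Z /\
      (exists ki kj, [/\ isD n v i ki, isD n v j kj &
                         in_carc n v (V n v ki) (V n v kj) Z]) /\
      in_oarc n v (V n v j.+1) (V n v i) Z &
      forall k, (k < n)%N -> in_edge n v k Z ->
        Z = midpoint (Ipt n v i k) (Ipt n v j k)].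

Lemma final (Z : R * R) s (t : R) q :
  let a0 := - side n v i Z in let b0 := - side n v j Z in
  let w := (b0 * (dir n v i).1 + a0 * (dir n v j).1,
            b0 * (dir n v i).2 + a0 * (dir n v j).2) in
  Z = seg_pt n v (i + s) t -> 0 <= t < 1 -> 0 < a0 -> 0 < b0 ->
  0 <= cross (dir n v q) w -> cross (dir n v q.+1) w <= 0 ->
  cross (psub Z (V n v q.+1)) w = 0 ->
  (0 < t -> cross (dir n v (i + s)) w = 0) ->
  (pI < s)%N -> ((s < J + pJ.+1)%N \/ (s = J + pJ.+1 /\ t = 0)) ->
  ((J.+1 < s)%N \/ (J.+1 = s /\ 0 < t)) -> (s < n)%N ->
  concl Z.
Proof.
move=> a0 b0 w hZ ht ha hb hc1 hc2 hc3 htan hs1 hs2 hs3 hsn.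
have hZP : inP n v Z.
  rewrite hZ; apply: seg_in_P; case/andP: ht => h1 h2; apply/andP; split => //; lra.
have cert := certif i j Z q hc1 hc2 hc3.
have cnz : c != 0 := Hnp i j hi hj hij.
have hK : 0 < (pnorm (dir n v i) * pnorm (dir n v j))^-1.
  by rewrite invr_gt0 mulr_gt0 ?pnorm_pos.
have f3 := F3.
split.
- exact: hZP.
- move=> Y hY; rewrite !disprod_eq //; apply: ler_wpM2r; first exact: ltW.
  have hY1 : 0 <= - side n v i Y by rewrite oppr_ge0; exact: inP_side.
  have hY2 : 0 <= - side n v j Y by rewrite oppr_ge0; exact: inP_side.
  have [h _] := amgm a0 b0 _ _ ha hb hY1 hY2 (cert Y hY).
  exact: h.
- move=> Y hY; rewrite !disprod_eq // => e.
  have e' := mulIf (lt0r_neq0 hK) e.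
  have hY1 : 0 <= - side n v i Y by rewrite oppr_ge0; exact: inP_side.
  have hY2 : 0 <= - side n v j Y by rewrite oppr_ge0; exact: inP_side.
  have [_ h] := amgm a0 b0 _ _ ha hb hY1 hY2 (cert Y hY).
  have [ea eb] := h e'.
  apply: (pt_eq _ _ _ _ cnz); rewrite -side_diff; rewrite /a0 /b0 in ea eb; lra.
- split; [|split].
  + by exists ((((i + s) %% n)%N)%:R + t); rewrite hZ; apply: bparam_seg.
  + exists ((i + pI.+1) %% n)%N, ((i + (J + pJ.+1)) %% n)%N; split.
    * exact: isD_gen.
    * have -> : ((i + (J + pJ.+1)) %% n)%N = ((j + pJ.+1) %% n)%N.
        by rewrite addnA; exact: jmod.
      exact: isD_gen.
    * exists (((i + pI.+1) %% n)%N)%:R, ((((i + s) %% n)%N)%:R + t),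
             (((i + (J + pJ.+1)) %% n)%N)%:R; split.
      - by have := bparam_V ((i + pI.+1) %% n)%N; rewrite modn_mod V_mod.
      - by rewrite hZ; apply: bparam_seg.
      - by have := bparam_V ((i + (J + pJ.+1)) %% n)%N; rewrite modn_mod V_mod.
      - apply: (cyc_closed i pI.+1 s (J + pJ.+1) t hi isT hs1 hsn _ ht hs2).
        case: hpJ => hp2 _; clear -f3 hp2; lia.
  + exists (((i + J.+1) %% n)%N)%:R, ((((i + s) %% n)%N)%:R + t),
           (((i + n) %% n)%N)%:R; split.
    * have -> : V n v j.+1 = V n v (i + J.+1).
        by rewrite (addnS i J) -(addn1 (i + J)) jV addn1.
      exact: bparam_V.
    * by rewrite hZ; apply: bparam_seg.
    * by have := bparam_V (i + n); rewrite Vn.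
    * apply: (cyc_open i J.+1 s n t hi isT _ hsn (leqnn n) ht hs3).
      by case: hs3 => [/ltnW|[->]].
- move=> k kn hk.
  have [tp ek] := edge_unique (i + s) t k Z ht hZ kn hk.
  have hsk : side n v k Z = 0 by rewrite hZ ek side_modn side_seg_self.
  have hki : cross (dir n v i) (dir n v k) != 0.
    apply: Hnp => //; apply/eqP => eik; move: ha; rewrite /a0 eik hsk oppr0 ltxx.
    by [].
  have hkj : cross (dir n v j) (dir n v k) != 0.
    apply: Hnp => //; apply/eqP => ejk; move: hb; rewrite /b0 ejk hsk oppr0 ltxx.
    by [].
  apply: midpt => //.
  have := htan tp; rewrite /w cross_w -(dir_eqmod _ _ (modn_mod (i + s) n)) -ek.
  by [].
Qed.


Lemma case_vertex r : (pI < r.+1 <= J + pJ.+1)%N -> (J.+2 <= r.+1 < n)%N ->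
  0 <= psiI r -> psiO r.+1 <= 0 -> exists Z, concl Z.
Proof.
move=> /andP [h1 h2] /andP [h3 h4] hI hO.
have [hp1 _] := hpI.
have ha := a_pos r.+1 ltac:(clear -h3 h4 hJ; lia).
have hb := b_pos r.+1 ltac:(clear -h3; lia) ltac:(clear -h4; lia).
exists (V n v (i + r.+1)).
apply: (final _ r.+1 0 (i + r)).
- by rewrite seg0.
- by rewrite lexx ltr01.
- exact: ha.
- exact: hb.
- rewrite cross_w; move: hI; rewrite /psiI /al /be /a_ /b_; lra.
- rewrite -addnS cross_w; move: hO; rewrite /psiO /al /be /a_ /b_; lra.
- rewrite -addnS /cross /psub /=; ring.
- by rewrite ltxx.
- exact: h1.
- case: (ltngtP r.+1 (J + pJ.+1)) => [lt|gt|eq]; [by left| |by right].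
  by rewrite ltnNge h2 in gt.
- by left; clear -h3; lia.
- exact: h4.
Qed.

Lemma plucker (x y z u : R * R) :
  cross x y * cross z u = cross x z * cross y u - cross x u * cross y z.
Proof. rewrite /cross; ring. Qed.

Lemma case_edge e : (pI < e)%N -> (e < J + pJ.+1)%N -> 0 < psiO e -> psiI e < 0 ->
  exists Z, concl Z.
Proof.
move=> h1 h2 hO hI.
have [hp1 _] := hpI.
have f2 := F2; have f3 := F3.
have en : (e < n)%N by clear -h2 f3 hp1 hJ; lia.
set D := psiO e - psiI e.
have hD : 0 < D by rewrite /D; lra.
set t := psiO e / D.
have tD : t * D = psiO e by rewrite /t divfK // lt0r_neq0.
have ht0 : 0 < t by rewrite /t divr_gt0.
have ht1 : t < 1 by rewrite /t ltr_pdivrMr // mul1r /D; lra.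
have hae := a_pos e ltac:(clear -h1 en hp1; lia).
have hae1 := a_ge0 e.+1.
have hbe := b_ge0 e.
have hbe1 := b_pos e.+1 ltac:(clear -h1 f2; lia) ltac:(clear -en; lia).
have sa := a_step e; have sb := b_step e.
set Z := seg_pt n v (i + e) t.
have eA : - side n v i Z = a_ e + t * al e.
  have eY : side n v i (V n v (i + e.+1)) = side n v i (V n v (i + e)) - al e.
    by move: sa; rewrite /a_; lra.
  by rewrite /Z side_seg -addnS eY /a_; ring.
have eB : - side n v j Z = b_ e + t * be e.
  have eY : side n v j (V n v (i + e.+1)) = side n v j (V n v (i + e)) - be e.
    by move: sb; rewrite /b_; lra.
  by rewrite /Z side_seg -addnS eY /b_; ring.
have hA : 0 < - side n v i Z.
  rewrite eA; have : a_ e.+1 = a_ e + al e by []; nra.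
have hB : 0 < - side n v j Z.
  rewrite eB; have : b_ e.+1 = b_ e + be e by []; nra.
have tan : cross (dir n v (i + e)) (- side n v j Z * (dir n v i).1 + - side n v i Z * (dir n v j).1,
     - side n v j Z * (dir n v i).2 + - side n v i Z * (dir n v j).2) = 0.
  rewrite cross_w eA eB -/(al e) -/(be e).
  have E : (b_ e + t * be e) * al e + (a_ e + t * al e) * be e = psiO e - t * D.
    by rewrite /D /psiO /psiI sa sb; ring.
  by rewrite E tD subrr.
have hal := alpha_neg e h1 en.
exists Z.
apply: (final _ e t (i + e)).
- by [].
- by rewrite ht1 ltW.
- exact: hA.
- exact: hB.
- by rewrite tan.
- set w := (_, _).
  have := plucker (dir n v (i + e).+1) w (dir n v (i + e)) (dir n v i).
  rewrite [cross w (dir n v (i + e))]cross_anti tan oppr0 mulr0 subr0.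
  have tk := turn (i + e).
  rewrite [cross (dir n v (i + e).+1) (dir n v (i + e))]cross_anti.
  have -> : cross w (dir n v i) = - side n v i Z * cross (dir n v j) (dir n v i).
    by rewrite /w /cross /=; ring.
  rewrite [cross (dir n v j) (dir n v i)]cross_anti -/c.
  have [hc _] := chase_c.
  rewrite -/(al e) => E.
  have pos : 0 < - cross (dir n v (i + e)) (dir n v (i + e).+1) *
      (- side n v i Z * - c).
    by apply: mulr_gt0; [lra | apply: mulr_gt0; lra].
  rewrite -E in pos.
  move: pos; rewrite nmulr_lgt0 //.
  by move/ltW.
- set w := (_, _).
  have -> : psub Z (V n v (i + e).+1) = ((t - 1) * (dir n v (i + e)).1, (t - 1) * (dir n v (i + e)).2).
    by rewrite /Z /seg_pt /psub /dir /=; congr (_, _); ring.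
  have : cross (dir n v (i + e)) w = 0 by exact: tan.
  rewrite /cross /=; nra.
- by move=> _; exact: tan.
- exact: h1.
- by left.
- case: (ltngtP J.+1 e) => [lt|gt|eq]; [by left| |by right].
  by exfalso; clear -gt h1 f2; lia.
- exact: en.
Qed.

End Main.

End S.

Theorem lemma4 (R : realType) (n : nat) (v : nat -> R * R) (i j : nat) :
  convex_cw n v -> no_parallel n v ->
  (i < n)%N -> (j < n)%N -> i != j -> chases n v i j ->
  exists Z : R * R,
    (* (1) Z is the unique maximizer of disprod_{l_i,l_j} on P *)
    [/\ inP n v Z,
        (forall Y, inP n v Y -> disprod n v i j Y <= disprod n v i j Z),
        (forall Y, inP n v Y -> disprod n v i j Y = disprod n v i j Z -> Y = Z),
    (* (2) Z on the boundary, in [D_i ↻ D_j] and in (v_{j+1} ↻ v_i) *)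
        on_boundary n v Z /\
        (exists ki kj, [/\ isD n v i ki, isD n v j kj &
                           in_carc n v (V n v ki) (V n v kj) Z]) /\
        in_oarc n v (V n v j.+1) (V n v i) Z &
    (* (3) if Z lies in an edge e_k, it is the midpoint of I_{i,k} and I_{j,k} *)
        forall k, (k < n)%N -> in_edge n v k Z ->
          Z = midpoint (Ipt n v i k) (Ipt n v j k)].
Proof.
move=> Hcv Hnp hi hj hij hch.
have [J [hJ hJm]] : exists J, (0 < J < n)%N /\ (i + J = j %[mod n])%N.
  case: (ltnP i j) => h.
    exists (j - i)%N; split; first by clear -h hj; lia.
    by rewrite subnKC // ltnW.
  exists (j + n - i)%N; split.
    by move: hij; clear -h hi hj; move/eqP; lia.
  have -> : (i + (j + n - i))%N = (j + n)%N by clear -hi; lia.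
  by rewrite modnDr.
have [pI hpI] := @unimodal R n v Hcv Hnp i.
have [pJ hpJ] := @unimodal R n v Hcv Hnp j.
have := @search R n v Hcv Hnp i j J pI pJ hi hj hij hch hJ hJm hpI hpJ.
case=> [[r [hr1 hr2 hr3 hr4]]|[e [he1 he2 he3 he4]]].
  have [Z hZ] := (@case_vertex R n v Hcv Hnp i j J pI pJ hi hj hij hch hJ hJm hpI hpJ r hr1 hr2 hr3 hr4).
  exists Z; exact: hZ.
have [Z hZ] := (@case_edge R n v Hcv Hnp i j J pI pJ hi hj hij hch hJ hJm hpI hpJ e he1 he2 he3 he4).
exists Z; exact: hZ.
Qed.
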